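(* Let $\mu$ be a nontrivial positive finite measure on $\partial\mathbb{D}$, let $n\ge1$, $1\le k\le n$, and let $z_1,\dots,z_k$ be zeros of $\Phi_n(z;\mu)$, repeated at most according to multiplicity (so $\prod_{j=1}^k(z-z_j)$ divides $\Phi_n(z;\mu)$). Then \[ \Phi_n(z;\mu)=\prod_{j=1}^k(z-z_j)\;\Phi_{n-k}\Bigl(z;\prod_{j=1}^k|z-z_j|^2\,d\mu\Bigr). \]
   Context: A measure on $\partial\mathbb{D}$ is nontrivial if its support is infinite. For a positive finite measure $\nu$ on $\partial\mathbb{D}$ with infinite support, $\Phi_n(z;\nu)$ is the unique monic polynomial of degree $n$ orthogonal in $L^2(\nu)$ to all polynomials of degree less than $n$; $\Phi_0=1$. In the formula, $\prod_{j}|z-z_j|^2d\mu$ denotes the measure with density $\prod_j|z-z_j|^2$ with respect to $\mu$. *)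

(* Defs.v *)
From HB Require Import structures.
From mathcomp Require Import all_boot all_order all_algebra.
From mathcomp Require Import all_classical all_reals all_analysis.
From mathcomp Require Import complex.
Set Implicit Arguments. Unset Strict Implicit. Unset Printing Implicit Defensive.
Import Order.TTheory GRing.Theory Num.Theory.
Import numFieldTopology.Exports numFieldNormedType.Exports.
Local Open Scope ring_scope.
Local Open Scope complex_scope.
Local Open Scope classical_set_scope.

Section OPUC.
Variable R : realType.

(* The complex plane is modelled as R * R (with its product = Borel sigma-algebra). *)
Definition toC (p : (R * R)%type) : R[i] := p.1 +i* p.2.

Definition unit_circle : set (R * R)%type := [set p | p.1 ^+ 2 + p.2 ^+ 2 = 1].

Definition msupport (mu : {measure set (R * R)%type -> \bar R}) : set (R * R)%type :=
  [set x | forall U : set (R * R)%type, open U -> U x -> (0 < mu U)%E].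

Definition nontrivial (mu : {measure set (R * R)%type -> \bar R}) : Prop :=
  infinite_set (msupport mu).

Definition cint (mu : {measure set (R * R)%type -> \bar R}) (f : (R * R)%type -> R[i]) : R[i] :=
  (Rintegral mu setT (fun x => complex.Re (f x))) +i* (Rintegral mu setT (fun x => complex.Im (f x))).

(* L^2 inner product w.r.t. the measure  w dmu  (w >= 0 a density) *)
Definition ipw (mu : {measure set (R * R)%type -> \bar R}) (w : (R * R)%type -> R[i])
  (f g : (R * R)%type -> R[i]) : R[i] :=
  cint mu (fun x => f x * (g x)^* * w x).

Definition is_monic_OP (mu : {measure set (R * R)%type -> \bar R}) (w : (R * R)%type -> R[i])
  (n : nat) (P : {poly R[i]}) : Prop :=
  [/\ P \is monic, size P = n.+1 &
      forall Q : {poly R[i]}, (size Q <= n)%N ->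
        ipw mu w (fun x => P.[toC x]) (fun x => Q.[toC x]) = 0].

Definition PhiW (mu : {measure set (R * R)%type -> \bar R}) (w : (R * R)%type -> R[i])
  (n : nat) : {poly R[i]} :=
  xget 0 [set P | is_monic_OP mu w n P].

Definition Phi (mu : {measure set (R * R)%type -> \bar R}) (n : nat) : {poly R[i]} :=
  PhiW mu (fun _ => 1) n.

End OPUC.

(* Main.v *)
Require Import Defs.
From HB Require Import structures.
From mathcomp Require Import all_boot all_order all_algebra.
From mathcomp Require Import all_classical all_reals all_analysis.
From mathcomp Require Import complex.
From mathcomp Require Import ring lra.
From mathcomp Require Import measurable_realfun finmap.
Import Order.TTheory GRing.Theory Num.Theory.
Import numFieldTopology.Exports numFieldNormedType.Exports.
Local Open Scope ring_scope.
Local Open Scope complex_scope.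
Local Open Scope classical_set_scope.

Set Implicit Arguments. Unset Strict Implicit.

Section Good.
Variable R : realType.
Implicit Types (f g : (R * R)%type -> R[i]).

Local Notation Re := complex.Re.
Local Notation Im := complex.Im.
Lemma cReD (x y : R[i]) : Re (x + y) = Re x + Re y. Proof. by case: x => a b; case: y => c d. Qed.
Lemma cImD (x y : R[i]) : Im (x + y) = Im x + Im y. Proof. by case: x => a b; case: y => c d. Qed.
Lemma cReM (x y : R[i]) : Re (x * y) = Re x * Re y - Im x * Im y. Proof. by case: x => a b; case: y => c d. Qed.
Lemma cImM (x y : R[i]) : Im (x * y) = Re x * Im y + Im x * Re y. Proof. case: x => a b; case: y => c d. by rewrite /= [a * d]mulrC [b*c]mulrC addrC. Qed.
Lemma cReN (x : R[i]) : Re (- x) = - Re x. Proof. by case: x => a b. Qed.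
Lemma cImN (x : R[i]) : Im (- x) = - Im x. Proof. by case: x => a b. Qed.
Lemma cReJ (x : R[i]) : Re (conjc x) = Re x. Proof. by case: x. Qed.
Lemma cImJ (x : R[i]) : Im (conjc x) = - Im x. Proof. by case: x. Qed.
Definition rgood (h : (R * R)%type -> R) :=
  [/\ measurable_fun setT h, continuous h &
      exists C, forall x, unit_circle x -> `|h x| <= C].

Definition good f := rgood (fun x => Re (f x)) /\ rgood (fun x => Im (f x)).

Lemma rgood_cst (c : R) : rgood (fun _ => c).
Proof.
split; first exact: measurable_cst.
  by move=> x; exact: cvg_cst.
by exists `|c|.
Qed.

Lemma rgood_fst : rgood (fun x => x.1).
Proof.
split; first exact: measurable_fst.
  by case=> a b; exact: cvg_fst.
exists 1 => -[a b]; rewrite /unit_circle /= => h.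
by rewrite ler_norml; apply/andP; split; nra.
Qed.

Lemma rgood_snd : rgood (fun x => x.2).
Proof.
split; first exact: measurable_snd.
  by case=> a b; exact: cvg_snd.
exists 1 => -[a b]; rewrite /unit_circle /= => h.
by rewrite ler_norml; apply/andP; split; nra.
Qed.

Lemma rgoodD {h1 h2} : rgood h1 -> rgood h2 -> rgood (fun x => h1 x + h2 x).
Proof.
move=> [m1 c1 [C1 b1]] [m2 c2 [C2 b2]]; split.
- exact: measurable_funD.
- by move=> x; apply: cvgD; [exact: c1|exact: c2].
- exists (C1 + C2) => x hx; apply: (le_trans (ler_normD _ _)).
  by apply: lerD; [exact: b1|exact: b2].
Qed.

Lemma rgoodM {h1 h2} : rgood h1 -> rgood h2 -> rgood (fun x => h1 x * h2 x).
Proof.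
move=> [m1 c1 [C1 b1]] [m2 c2 [C2 b2]]; split.
- exact: measurable_funM.
- by move=> x; apply: cvgM; [exact: c1|exact: c2].
- exists (C1 * C2) => x hx; rewrite normrM.
  by apply: ler_pM; rewrite ?normr_ge0 //; [exact: b1|exact: b2].
Qed.

Lemma rgoodN {h} : rgood h -> rgood (fun x => - h x).
Proof.
move=> [m c [C b]]; split.
- exact: measurableT_comp.
- by move=> x; apply: cvgN; exact: c.
- by exists C => x hx; rewrite normrN; exact: b.
Qed.

Lemma good_cst (c : R[i]) : good (fun _ => c).
Proof. split; exact: rgood_cst. Qed.

Lemma good_toC : good (@toC R).
Proof. split; [exact: rgood_fst | exact: rgood_snd]. Qed.

Lemma goodD {f g} : good f -> good g -> good (fun x => f x + g x).
Proof.
move=> [f1 f2] [g1 g2]; split.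
  by under [X in rgood X]funext do rewrite cReD; exact: rgoodD.
by under [X in rgood X]funext do rewrite cImD; exact: rgoodD.
Qed.

Lemma goodM {f g} : good f -> good g -> good (fun x => f x * g x).
Proof.
move=> [f1 f2] [g1 g2]; split.
  under [X in rgood X]funext do rewrite cReM.
  by apply: rgoodD; [exact: rgoodM|apply: rgoodN; exact: rgoodM].
under [X in rgood X]funext do rewrite cImM.
by apply: rgoodD; exact: rgoodM.
Qed.

Lemma goodJ {f} : good f -> good (fun x => conjc (f x)).
Proof.
move=> [f1 f2]; split.
  by under [X in rgood X]funext do rewrite cReJ.
by under [X in rgood X]funext do rewrite cImJ; exact: rgoodN.
Qed.

Lemma good_poly (p : {poly R[i]}) : good (fun x => p.[toC x]).
Proof.
elim/poly_ind: p => [|p c IH].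
  by under [X in good X]funext do rewrite horner0; exact: good_cst.
under [X in good X]funext do rewrite hornerMXaddC.
apply: goodD; last exact: good_cst.
apply: goodM => //; exact: good_toC.
Qed.


Lemma toC_inj : injective (@toC R).
Proof. by case=> a b [c d] [-> ->]. Qed.

Lemma rgood_norm2 (E : {poly R[i]}) :
  rgood (fun x => Re E.[toC x] ^+ 2 + Im E.[toC x] ^+ 2).
Proof.
have [g1 g2] := good_poly E.
by apply: rgoodD; rewrite /GRing.exp /=; apply: rgoodM.
Qed.

Lemma zero_set_finite (E : {poly R[i]}) : E != 0 ->
  finite_set [set x | E.[toC x] = 0].
Proof.
move=> E0; apply: contrapT => infZ.
have [B BZ szB] := infinite_set_fset (size E) infZ.
have hall : all (root E) (map (@toC R) (enum_fset B)).
  apply/allP => t /mapP[x xB ->]; apply/rootP; exact: (BZ x xB).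
have huniq : uniq (map (@toC R) (enum_fset B)).
  by rewrite map_inj_uniq ?fset_uniq //; exact: toC_inj.
by have := max_poly_roots E0 hall huniq; rewrite size_map ltnNge szB.
Qed.

Variable mu : {finite_measure set (R * R)%type -> \bar R}.
Hypothesis muN : mu (~` @unit_circle R) = 0%E.

Lemma mcircle : measurable (@unit_circle R).
Proof.
have [m _ _] := rgoodD (rgoodM rgood_fst rgood_fst) (rgoodM rgood_snd rgood_snd).
have := m measurableT [set 1] (measurable_set1 1).
rewrite setTI; congr measurable; apply/seteqP; split => x /=; by rewrite !expr2.
Qed.

End Good.

Section Integ.
Variable R : realType.
Local Notation Re := complex.Re.
Local Notation Im := complex.Im.
Variable mu : {finite_measure set (R * R)%type -> \bar R}.
Hypothesis muN : mu (~` @unit_circle R) = 0%E.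

Lemma rgood_int h : rgood h -> mu.-integrable setT (EFin \o h).
Proof.
move=> [mh ch [C hC]].
have mN : measurable (~` @unit_circle R) by apply: measurableC; exact: mcircle.
apply/(negligible_integrable mN measurableT _ muN).
  exact/measurable_EFinP.
apply: (@le_integrable _ _ _ mu _ _ _ (EFin \o cst C)).
- by apply: measurableD.
- by apply/measurable_EFinP; apply: measurable_funS mh.
- move=> x [_ /= /contrapT cx]; rewrite lee_fin (le_trans (hC x cx)) //.
  exact: ler_norm.
- apply: finite_measure_integrable_cst; exact: measurableD.
Qed.

Lemma cintD f g : good f -> good g ->
  cint mu (fun x => f x + g x) = cint mu f + cint mu g.
Proof.
move=> [f1 f2] [g1 g2]; rewrite /cint.
under eq_Rintegral do rewrite cReD.
under [X in _ +i* X]eq_Rintegral do rewrite cImD.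
rewrite RintegralD //; try exact: rgood_int.
by rewrite RintegralD //; exact: rgood_int.
Qed.

Lemma cintMl (c : R[i]) f : good f ->
  cint mu (fun x => c * f x) = c * cint mu f.
Proof.
move=> [f1 f2]; rewrite /cint.

under eq_Rintegral do rewrite cReM.
under [X in _ +i* X]eq_Rintegral do rewrite cImM.
have i1 := rgood_int (rgoodM (rgood_cst (Re c)) f1).
have i2 := rgood_int (rgoodM (rgood_cst (Im c)) f2).
have i3 := rgood_int (rgoodM (rgood_cst (Re c)) f2).
have i4 := rgood_int (rgoodM (rgood_cst (Im c)) f1).
rewrite RintegralB // RintegralD // !RintegralZl //; try exact: rgood_int.
clear i1 i2 i3 i4; case: c => a b /=.
set A := Rintegral _ _ _; set B := Rintegral _ _ _.
apply/eqP; rewrite eq_complex /=; apply/andP; split; apply/eqP; ring.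
Qed.

Lemma cintJ f : good f -> cint mu (fun x => conjc (f x)) = conjc (cint mu f).
Proof.
move=> [f1 f2]; rewrite /cint.
under eq_Rintegral do rewrite cReJ.
under [X in _ +i* X]eq_Rintegral do rewrite cImJ -mulN1r.
by rewrite RintegralZl ?mulN1r //; exact: rgood_int.
Qed.

Lemma norm2_pos (E : {poly R[i]}) : nontrivial mu -> E != 0 ->
  0 < Rintegral mu setT (fun x => Re E.[toC x] ^+ 2 + Im E.[toC x] ^+ 2).
Proof.
move=> ntr E0.
set h := fun x => _.
have hg : rgood h := rgood_norm2 E.
have [mh ch _] := hg.
have [x0 [sx0 Zx0]] : exists x0, msupport mu x0 /\ E.[toC x0] != 0.
  have := infinite_setN0 (infinite_setD ntr (zero_set_finite E0)).
  by case=> x0 [sx0 /= nz]; exists x0; split => //; exact/eqP.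
have h0 : 0 < h x0.
  rewrite /h; move: Zx0; case: (E.[toC x0]) => a b /= ab.
  rewrite lt_neqAle addr_ge0 ?sqr_ge0 // andbT eq_sym paddr_eq0 ?sqr_ge0 //.
  by rewrite !sqrf_eq0; move: ab; rewrite eq_complex.
set c := h x0.
have c0 : 0 < c := h0.
pose U := h @^-1` [set y | c / 2 < y].
have oU : open U by apply: open_comp; [move=> x _; exact: ch | exact: open_gt].
have Ux0 : U x0 by rewrite /U /= -/c; lra.
have muU : (0 < mu U)%E := sx0 U oU Ux0.
have mU : measurable U.
  have mY : measurable [set y : R | c / 2 < y].
    by apply: open_measurable; exact: open_gt.
  by have := mh measurableT _ mY; rewrite setTI.
have fin : mu U \is a fin_num := fin_num_measure mu _ mU.
have iU : mu.-integrable setT (EFin \o (fun x => c / 2 * \1_U x)).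
  apply: (eq_integrable measurableT _ _ _ (integrableZl measurableT (c / 2) (integrable_indic mu mU))).
  by move=> x _ /=; rewrite EFinM.
apply: (lt_le_trans _ (le_Rintegral measurableT iU (rgood_int hg) _)).
  rewrite RintegralZl //; last exact: integrable_indic.
  apply: mulr_gt0; first lra.
  rewrite /Rintegral integral_indic // setIT.
  by apply: fine_gt0; rewrite muU /= -ge0_fin_numE ?fin // ltW.
move=> x _; rewrite indicE; have [xU|xU] := boolP (x \in U).
  by rewrite mulr1; move/set_mem: xU => /= xU; apply: ltW.
by rewrite mulr0 /h addr_ge0 ?sqr_ge0.
Qed.

End Integ.

Lemma size_sub_lc (F : nzRingType) (p q : {poly F}) n :
  size p = n.+1 -> size q = n.+1 -> lead_coef p = lead_coef q ->
  (size (p - q)%R <= n)%N.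
Proof.
move=> sp sq lpq; apply/leq_sizeP => j; rewrite leq_eqVlt => /orP[/eqP <-|nj].
  by rewrite coefB -[n]/(n.+1.-1) -{1}sp -sq -!lead_coefE lpq subrr.
by rewrite coefB !nth_default ?subrr // ?sp ?sq.
Qed.

Section IP.
Variable R : realType.
Local Notation Re := complex.Re.
Local Notation Im := complex.Im.
Variable mu : {finite_measure set (R * R)%type -> \bar R}.
Hypothesis muN : mu (~` @unit_circle R) = 0%E.
Hypothesis ntr : nontrivial mu.

Lemma cJD (x y : R[i]) : conjc (x + y) = conjc x + conjc y. Proof. exact: rmorphD. Qed.
Lemma cJM (x y : R[i]) : conjc (x * y) = conjc x * conjc y. Proof. exact: rmorphM. Qed.
Lemma cJ0 : conjc (0 : R[i]) = 0. Proof. exact: rmorph0. Qed.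
Lemma cJ1 : conjc (1 : R[i]) = 1. Proof. exact: rmorph1. Qed.

Definition wB (B : {poly R[i]}) := fun x : R * R => B.[toC x] * conjc (B.[toC x]).

Variable B : {poly R[i]}.
Hypothesis B0 : B != 0.

Definition ip (p q : {poly R[i]}) :=
  ipw mu (wB B) (fun x => p.[toC x]) (fun x => q.[toC x]).

Lemma good_int (p q : {poly R[i]}) :
  good (fun x => p.[toC x] * conjc (q.[toC x]) * wB B x).
Proof.
apply: goodM; first by apply: goodM; [exact: good_poly | apply: goodJ; exact: good_poly].
by apply: goodM; [exact: good_poly | apply: goodJ; exact: good_poly].
Qed.

Lemma ipDl p q r : ip (p + q) r = ip p r + ip q r.
Proof.
rewrite /ip /ipw -cintD //; try exact: good_int.
by congr cint; apply/funext => x; rewrite hornerD !mulrDl.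
Qed.

Lemma ipZl a p r : ip (a *: p) r = a * ip p r.
Proof.
rewrite /ip /ipw -cintMl //; last exact: good_int.
by congr cint; apply/funext => x; rewrite hornerZ !mulrA.
Qed.

Lemma ip_conj p q : ip q p = conjc (ip p q).
Proof.
rewrite /ip /ipw -cintJ //; last exact: good_int.
congr cint; apply/funext => x; rewrite /wB !rmorphM /= !conjcK.
ring.
Qed.

Lemma ip_pos p : p != 0 -> ip p p != 0.
Proof.
move=> p0; have pB0 : p * B != 0 by rewrite mulf_neq0.
have := norm2_pos muN ntr pB0.
apply: contraTneq => ip0; rewrite -leNgt le_eqVlt; apply/orP; left; apply/eqP.
move: ip0; rewrite /ip /ipw /cint => -[<- _].
apply: eq_Rintegral => x _; rewrite /wB hornerM.
set a := p.[toC x]; set b := B.[toC x].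
case: a => a1 a2; case: b => b1 b2 /=. ring.
Qed.

Lemma ip0l r : ip 0 r = 0.
Proof. by rewrite -(scale0r (0 : {poly R[i]})) ipZl mul0r. Qed.

Lemma ipNl p r : ip (- p) r = - ip p r.
Proof. by rewrite -scaleN1r ipZl mulN1r. Qed.

Lemma ipBl p q r : ip (p - q) r = ip p r - ip q r.
Proof. by rewrite ipDl ipNl. Qed.

Lemma ipDr p q r : ip p (q + r) = ip p q + ip p r.
Proof. by rewrite ip_conj ipDl cJD -!ip_conj. Qed.

Lemma ipZr p a q : ip p (a *: q) = conjc a * ip p q.
Proof. by rewrite ip_conj ipZl cJM -ip_conj. Qed.

Lemma ip0r p : ip p 0 = 0.
Proof. by rewrite ip_conj ip0l cJ0. Qed.

Lemma ip_suml (I : Type) (r : seq I) (F : I -> {poly R[i]}) q :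
  ip (\sum_(i <- r) F i) q = \sum_(i <- r) ip (F i) q.
Proof. exact: (big_morph (fun p => ip p q) (fun p1 p2 => ipDl p1 p2 q) (ip0l q)). Qed.

Lemma OP_unique m P1 P2 :
  is_monic_OP mu (wB B) m P1 -> is_monic_OP mu (wB B) m P2 -> P1 = P2.
Proof.
case=> m1 s1 o1 [m2 s2 o2].
have sD : (size (P1 - P2)%R <= m)%N.
  by apply: size_sub_lc s1 s2 _; rewrite (monicP m1) (monicP m2).
have h : ip (P1 - P2) (P1 - P2) = 0 by rewrite ipBl /ip (o1 _ sD) (o2 _ sD) subrr.
apply/eqP; rewrite -subr_eq0; apply/negPn/negP => /ip_pos; by rewrite h eqxx.
Qed.

Lemma OP_exists m : exists P, is_monic_OP mu (wB B) m P.
Proof.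
elim/ltn_ind: m => m IH.
have F_OP j : (j < m)%N -> is_monic_OP mu (wB B) j (PhiW mu (wB B) j).
  by move=> jm; rewrite /PhiW; exact: xgetPex (IH j jm).
set F := fun j => PhiW mu (wB B) j.
set c := fun j : 'I_m => ip 'X^m (F j) / ip (F j) (F j).
set S := \sum_(j < m) c j *: F j.
have sS : (size S <= m)%N.
  rewrite /S; apply: (big_ind (fun p : {poly R[i]} => (size p <= m)%N)) => //=.
  - by rewrite size_poly0.
  - by move=> p q hp hq; rewrite (leq_trans (size_polyD p q)) // geq_max hp hq.
  - move=> j _; rewrite (leq_trans (size_scale_leq _ _)) //.
    by have [_ -> _] := F_OP j (ltn_ord j); exact: ltn_ord.
have sX : size ('X^m : {poly R[i]}) = m.+1 := size_polyXn _ m.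
have sNS : (size (- S)%R < size ('X^m : {poly R[i]}))%N by rewrite size_polyN sX ltnS.
have sP : size ('X^m - S) = m.+1 by rewrite size_polyDl // sX.
have orthF : forall i : 'I_m, ip ('X^m - S) (F i) = 0.
  move=> i; rewrite ipBl /S ip_suml (bigD1 i) //= big1 ?addr0.
    have [mi _ _] := F_OP i (ltn_ord i).
    by rewrite ipZl /c divfK ?subrr //; apply: ip_pos; exact: monic_neq0.
  move=> j ji; rewrite ipZl; apply/eqP; rewrite mulf_eq0; apply/orP; right; apply/eqP.
  case: (ltngtP i j) => [ij|ji'|e].
  - have [_ _ o] := F_OP j (ltn_ord j); apply: o.
    by have [_ -> _] := F_OP i (ltn_ord i).
  - have [_ _ o] := F_OP i (ltn_ord i); rewrite ip_conj /ip o ?cJ0 //.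
    by have [_ -> _] := F_OP j (ltn_ord j).
  - by move/val_inj: e => e; rewrite e eqxx in ji.
exists ('X^m - S); split => //.
  by rewrite monicE lead_coefDl // lead_coefXn.
have key : forall s, (s <= m)%N -> forall Q : {poly R[i]}, (size Q <= s)%N ->
    ip ('X^m - S) Q = 0.
  elim=> [|s IHs] sm Q.
    by rewrite size_poly_leq0 => /eqP ->; rewrite ip0r.
  have [Qs _|Qs sQ] := leqP (size Q) s; first by apply: IHs => //; exact: ltnW.
  have sQe : size Q = s.+1 by apply/eqP; rewrite eqn_leq sQ Qs.
  have Q0 : Q != 0 by rewrite -size_poly_eq0 sQe.
  have lc0 : lead_coef Q != 0 by rewrite lead_coef_eq0.
  have [mF sF _] := F_OP s sm.
  set X := lead_coef Q *: F s.
  have sXe : size X = s.+1 by rewrite size_scale.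
  have sQX : (size (Q - X)%R <= s)%N.
    by apply: size_sub_lc sQe sXe _; rewrite lead_coefZ (monicP mF) mulr1.
  rewrite -(subrK X Q) ipDr (IHs (ltnW sm) _ sQX) ipZr add0r.
  by rewrite (orthF (Ordinal sm)) mulr0.
by move=> Q sQ; apply: (key m).
Qed.

End IP.




Unset Implicit Arguments. Set Strict Implicit.

Lemma cJprod (R : realType) (I : Type) (r : seq I) (F : I -> R[i]) :
  conjc (\prod_(i <- r) F i) = \prod_(i <- r) conjc (F i).
Proof. exact: rmorph_prod. Qed.

Lemma NconjE (R : realType) (x : R[i]) : Num.conj x = conjc x.
Proof.
have [->|x0] := eqVneq x 0; first by rewrite conjC0 cJ0.
by apply: (mulfI x0); rewrite -normCK sqr_normc.
Qed.

Theorem theorem3 (R : realType) (mu : {finite_measure set (R * R)%type -> \bar R})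
  (n k : nat) (z : 'I_k -> R[i]) :
  mu (~` @unit_circle R) = 0%E ->
  nontrivial mu ->
  (1 <= n)%N -> (1 <= k <= n)%N ->
  (\prod_(j < k) ('X - (z j)%:P)) %| Phi mu n ->
  Phi mu n =
    (\prod_(j < k) ('X - (z j)%:P)) *
    PhiW mu (fun x => \prod_(j < k) `|toC x - z j| ^+ 2) (n - k).
Proof.
move=> muN ntr n1 /andP[k1 kn] dvd.
set Bz := \prod_(j < k) ('X - (z j)%:P).
have w1 : (fun _ : (R * R)%type => (1 : R[i])) = wB 1.
  apply/funext => x; by rewrite /wB -polyC1 hornerC cJ1 mulr1.
have wz : (fun x => \prod_(j < k) `|toC x - z j| ^+ 2) = wB Bz.
  apply/funext => x; rewrite /wB horner_prod cJprod -big_split /=.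
  by apply: eq_bigr => j _; rewrite hornerXsubC sqr_normc.
rewrite /Phi w1 in dvd *; rewrite wz.
set P := PhiW mu (wB 1) n.
have B10 : (1 : {poly R[i]}) != 0 := oner_neq0 _.
have PO : is_monic_OP mu (wB 1) n P.
  by rewrite /P /PhiW; apply: xgetPex; exact: (OP_exists muN ntr B10).
have [mP sP oP] := PO.
have mBz : Bz \is monic := monic_prod_XsubC _ _ _.
have sBz : size Bz = k.+1 by rewrite size_prod_XsubC [index_enum _]unlock -enumT size_enum_ord.
have Bz0 : Bz != 0 := monic_neq0 mBz.
set Q := P %/ Bz.
have PQ : P = Q * Bz by rewrite divpK.
have mQ : Q \is monic by rewrite -(monicMr Q mBz) -PQ.
have sQ : size Q = (n - k).+1.
  have := size_mul (monic_neq0 mQ) Bz0; rewrite -PQ sP sBz addnS /= => h.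
  by rewrite -subSn // h addnK.
have QO : is_monic_OP mu (wB Bz) (n - k) Q.
  split => // Q' sQ'.
  have sQB : (size (Q' * Bz)%R <= n)%N.
    rewrite (leq_trans (size_polyMleq _ _)) // sBz addnS /=.
    by rewrite -(subnK kn) leq_add2r.
  rewrite -(oP _ sQB) /ipw; congr cint; apply/funext => x.
  rewrite /wB PQ !hornerM hornerC !NconjE cJ1 !cJM; ring.
have -> : PhiW mu (wB Bz) (n - k) = Q.
  rewrite /PhiW; apply: (xget_unique _ (QO)) => y yO.
  exact: (OP_unique muN ntr Bz0 yO QO).
by rewrite mulrC -PQ.
Qed.
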